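(* Let $q=p^m$ with $p$ an odd prime and $m$ a positive integer. Let $\delta\in\mathbb{F}_{q^2}$, $b_1,b_2,b_3\in\mathbb{F}_q$, let $\varepsilon$ be a primitive element of $\mathbb{F}_{q^2}$, let $d_1,d_2,d_3$ be odd integers and $t=(q+1)/2$. Let $i$ be a non-negative integer with $i<2m$, let $j$ be the integer with $0\leq j<m$ and $j\equiv i\pmod m$, and let $d=\gcd(m,j)$. Let $$P(x)=b_1\varepsilon^{td_1}(x^q+x+\delta)^{p^i+q}+b_2\varepsilon^{td_2}(x^q+x+\delta)^{p^i+1}+b_3\varepsilon^{td_3}(x^q+x+\delta)^{2p^i}-x,$$ and put $$A=(\delta^q-\delta)(b_1\varepsilon^{td_1}-b_2\varepsilon^{td_2})+2b_3\varepsilon^{td_3}(\delta^{p^i}-\delta^{p^iq}),$$ $$B=1+(\delta^{p^iq}-\delta^{p^i})(b_1\varepsilon^{td_1}+b_2\varepsilon^{td_2}),$$ $$C=(\delta^{p^i+q}-\delta^{p^iq+1})b_1\varepsilon^{td_1}+(\delta^{p^i+1}-\delta^{p^iq+q})b_2\varepsilon^{td_2}+(\delta^{2p^i}-\delta^{2p^iq})b_3\varepsilon^{td_3}.$$ For $y$ define $G(y)=b_1\varepsilon^{td_1}y^{p^i+q}+b_2\varepsilon^{td_2}y^{p^i+1}+b_3\varepsilon^{td_3}y^{2p^i}$. Then: (1) If $i\in\{0,m\}$, then $P$ permutes $\mathbb{F}_{q^2}$ if and only if $A-B\neq0$, and in that case $P^{-1}(x)=G\!\left((A-B)^{-1}(x^q+x)-(A-B)^{-1}C+\delta\right)-x$.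 (2) If $i\notin\{0,m\}$, $A=0$ and $B\neq0$, then $P$ permutes $\mathbb{F}_{q^2}$ and $P^{-1}(x)=G\!\left(-B^{-1}(x^q+x)+B^{-1}C+\delta\right)-x$. (3) If $i\notin\{0,m\}$, $A\neq0$ and $B=0$, then $P$ permutes $\mathbb{F}_{q^2}$ and $P^{-1}(x)=G\!\left(A^{-p^{m-j}}(x^q+x)^{p^{m-j}}-(C/A)^{p^{m-j}}+\delta\right)-x$. (4) If $i\notin\{0,m\}$ and $AB\neq0$, then $P$ permutes $\mathbb{F}_{q^2}$ if and only if $N_{p^m/p^d}(B/A)\neq1$, and in that case $$P^{-1}(x)=G\!\left(\delta+\frac{N_{p^m/p^d}(B/A)}{1-N_{p^m/p^d}(B/A)}\sum_{k=0}^{m/d-1}\left(\frac{A}{B}\right)^{\frac{p^{(k+1)j}-1}{p^j-1}}\left(\frac{x^q+x}{A}-\frac{C}{A}\right)^{p^{kj}}\right)-x.$$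
   Context: For $a\in\mathbb{F}_{p^m}$ and $d\mid m$, $N_{p^m/p^d}(a)=a^{(p^m-1)/(p^d-1)}$ is the norm to $\mathbb{F}_{p^d}$. The compositional inverse of a permutation polynomial $f$ of $\mathbb{F}_{Q}$ is the unique polynomial $f^{-1}$ (modulo $x^Q-x$) with $f(f^{-1}(c))=f^{-1}(f(c))=c$ for all $c\in\mathbb{F}_Q$. The auxiliary notation $G$ is only shorthand for writing out the three-term expression. *)

(* Defs.v *)
From HB Require Import structures.
From mathcomp Require Import all_boot all_order all_algebra all_field.
Set Implicit Arguments. Unset Strict Implicit. Unset Printing Implicit Defensive.
Import Order.TTheory GRing.Theory Num.Theory.
Local Open Scope ring_scope.

Definition normpd (F : finFieldType) (p m d : nat) (a : F) : F :=
  a ^+ ((p ^ m).-1 %/ (p ^ d).-1).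

Definition comp_inverse (F : finFieldType) (f g : F -> F) : Prop :=
  forall c : F, f (g c) = c /\ g (f c) = c.

(* Main.v *)
Require Import Defs.
From HB Require Import structures.
From mathcomp Require Import all_boot all_order all_algebra all_field.
From mathcomp Require Import ring zify.
Import Order.TTheory GRing.Theory Num.Theory.
Set Implicit Arguments. Unset Strict Implicit.
Local Open Scope ring_scope.

Lemma frD (F : fieldType) (p : nat) (ch : p \in [pchar F]) k (x y : F) :
  (x + y) ^+ (p ^ k) = x ^+ (p ^ k) + y ^+ (p ^ k).
Proof.
apply: exprDn_pchar; rewrite pnatX; apply/orP; left.
by rewrite (eq_pnat _ (pcharf_eq ch)) pnat_id // (pcharf_prime ch).
Qed.

Lemma frN (F : fieldType) (p : nat) (ch : p \in [pchar F]) k (x : F) :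
  (- x) ^+ (p ^ k) = - x ^+ (p ^ k).
Proof.
have hp : (0 < p ^ k)%N by rewrite expn_gt0 (prime_gt0 (pcharf_prime ch)).
apply/eqP; rewrite -subr_eq0 opprK -frD // addNr expr0n.
by rewrite eqn0Ngt hp.
Qed.

Lemma frB (F : fieldType) (p : nat) (ch : p \in [pchar F]) k (x y : F) :
  (x - y) ^+ (p ^ k) = x ^+ (p ^ k) - y ^+ (p ^ k).
Proof. by rewrite frD // frN. Qed.

Lemma fr0 (F : fieldType) (p : nat) (ch : p \in [pchar F]) k :
  (0 : F) ^+ (p ^ k) = 0.
Proof.
have hp : (0 < p ^ k)%N by rewrite expn_gt0 (prime_gt0 (pcharf_prime ch)).
by rewrite expr0n eqn0Ngt hp.
Qed.

Lemma frS (F : fieldType) (p : nat) (ch : p \in [pchar F]) k (I : Type) (r : seq I) (P : pred I) (f : I -> F) :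
  (\sum_(i <- r | P i) f i) ^+ (p ^ k) = \sum_(i <- r | P i) f i ^+ (p ^ k).
Proof.
apply: (big_rec2 (fun a b => a ^+ (p ^ k) = b)); first exact: fr0.
by move=> i a b _ <-; rewrite frD.
Qed.

Lemma frn (F : fieldType) (p : nat) (ch : p \in [pchar F]) k n :
  (n%:R : F) ^+ (p ^ k) = n%:R.
Proof.
elim: n => [|n IH]; first by rewrite fr0.
by rewrite -addn1 natrD frD // IH expr1n.
Qed.

Lemma fq_powk (F : fieldType) (p m : nat) (x : F) :
  x ^+ (p ^ m) = x -> forall k, x ^+ (p ^ (k * m)) = x.
Proof.
move=> hx; elim=> [|k IH]; first by rewrite mul0n expn0 expr1.
by rewrite mulSn expnD exprM hx IH.
Qed.

Lemma fq_pow_mod (F : fieldType) (p m : nat) (x : F) :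
  x ^+ (p ^ m) = x -> forall e, x ^+ (p ^ e) = x ^+ (p ^ (e %% m)).
Proof.
move=> hx e; rewrite {1}(divn_eq e m) expnD exprM fq_powk //.
Qed.


Lemma frame (F : finFieldType) (q : nat)
  (trD : forall x y : F, (x + y) ^+ q = x ^+ q + y ^+ q)
  (trN : forall x : F, (- x) ^+ q = - x ^+ q)
  (hqq : forall x : F, x ^+ q ^+ q = x)
  (G : F -> F) (delta : F) (L M : F -> F)
  (htr : forall z, z ^+ q = z -> G (z + delta) ^+ q + G (z + delta) = L z + z)
  (hM : forall w, w ^+ q = w -> M w ^+ q = M w)
  (hLM : forall w, w ^+ q = w -> L (M w) = w)
  (hinj : forall z1 z2, z1 ^+ q = z1 -> z2 ^+ q = z2 -> L z1 = L z2 -> z1 = z2) :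
  comp_inverse (fun x => G (x ^+ q + x + delta) - x)
               (fun x => G (M (x ^+ q + x) + delta) - x).
Proof.
have trq : forall c : F, (c ^+ q + c) ^+ q = c ^+ q + c.
  by move=> c; rewrite trD hqq addrC.
move=> c; split.
- set w := c ^+ q + c.
  have hw : w ^+ q = w by exact: trq.
  set y := G (M w + delta) - c.
  have ty : y ^+ q + y = M w.
    rewrite /y trD trN.
    have := htr _ (hM _ hw); rewrite hLM //.
    move=> e; rewrite -[in RHS](addKr w (M w)) -[in RHS]e /w; ring.
  by rewrite ty /y; ring.
- set z := c ^+ q + c.
  have hz : z ^+ q = z by exact: trq.
  have tP : (G (z + delta) - c) ^+ q + (G (z + delta) - c) = L z.
    rewrite trD trN.
    have := htr _ hz; move=> e.
    rewrite -[in RHS](addrK z (L z)) -[in RHS]e /z; ring.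
  rewrite tP.
  have hL : L z ^+ q = L z by rewrite -tP trq.
  have -> : M (L z) = z.
    apply: hinj => //; first exact: hM.
    exact: hLM.
  ring.
Qed.

Lemma not_inj (F : finFieldType) (q : nat)
  (trD : forall x y : F, (x + y) ^+ q = x ^+ q + y ^+ q)
  (trM : forall x y : F, (x * y) ^+ q = x ^+ q * y ^+ q)
  (trN : forall x : F, (- x) ^+ q = - x ^+ q)
  (h : F) (hh : h ^+ q + h = 1)
  (G : F -> F) (delta : F) (L : F -> F)
  (htr : forall z, z ^+ q = z -> G (z + delta) ^+ q + G (z + delta) = L z + z)
  z1 z2 : z1 ^+ q = z1 -> z2 ^+ q = z2 -> z1 != z2 -> L z1 = L z2 ->
  ~ injective (fun x => G (x ^+ q + x + delta) - x).
Proof.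
move=> h1 h2 ne eL inj.
set x1 := h * z1.
have t1 : x1 ^+ q + x1 = z1 by rewrite /x1 trM h1 -mulrDl hh mul1r.
set x2 := x1 + G (z2 + delta) - G (z1 + delta).
have t2 : x2 ^+ q + x2 = z2.
  have -> : x2 ^+ q + x2 = (x1 ^+ q + x1) + (G (z2 + delta) ^+ q + G (z2 + delta))
     - (G (z1 + delta) ^+ q + G (z1 + delta)).
    rewrite /x2 !trD !trN; ring.
  rewrite htr // htr // t1 eL; ring.
have : x1 = x2.
  apply: inj => /=; rewrite t1 t2 /x2; ring.
move=> e; move: ne; rewrite -t1 -t2 -e eqxx //.
Qed.

Lemma trace_id (F : fieldType) (q pi : nat)
  (trD : forall x y : F, (x + y) ^+ q = x ^+ q + y ^+ q)
  (hqq : forall x : F, x ^+ q ^+ q = x)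
  (piD : forall x y : F, (x + y) ^+ pi = x ^+ pi + y ^+ pi)
  (e1 e2 e3 delta z : F)
  (he1 : e1 ^+ q = - e1) (he2 : e2 ^+ q = - e2) (he3 : e3 ^+ q = - e3)
  (hz : z ^+ q = z) :
  let G := fun y : F => e1 * y ^+ (pi + q) + e2 * y ^+ (pi + 1) + e3 * y ^+ (2 * pi) in
  G (z + delta) ^+ q + G (z + delta) =
   ((delta ^+ q - delta) * (e1 - e2)
           + 2%:R * e3 * (delta ^+ pi - delta ^+ (pi * q))) * z ^+ pi
   - (1 + (delta ^+ (pi * q) - delta ^+ pi) * (e1 + e2)) * z
   + ((delta ^+ (pi + q) - delta ^+ (pi * q + 1)) * e1
           + (delta ^+ (pi + 1) - delta ^+ (pi * q + q)) * e2
           + (delta ^+ (2 * pi) - delta ^+ (2 * pi * q)) * e3) + z.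
Proof.
move=> G.
have E1 : delta ^+ (pi * q) = (delta ^+ q) ^+ pi by rewrite mulnC exprM.
have E3 : delta ^+ (pi * q + 1) = (delta ^+ q) ^+ pi * delta by rewrite exprD E1 expr1.
have E5 : delta ^+ (pi * q + q) = (delta ^+ q) ^+ pi * delta ^+ q by rewrite exprD E1.
have E7 : delta ^+ (2 * pi * q) = ((delta ^+ q) ^+ pi) ^+ 2.
  by rewrite -E1 -exprM; congr (_ ^+ _); lia.
have E2 : delta ^+ (pi + q) = delta ^+ pi * delta ^+ q by rewrite exprD.
have E4 : delta ^+ (pi + 1) = delta ^+ pi * delta by rewrite exprD expr1.
have E6 : delta ^+ (2 * pi) = (delta ^+ pi) ^+ 2 by rewrite mulnC exprM.
rewrite E3 E5 E7 E2 E4 E6 E1.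
rewrite /G.
set y := z + delta.
have Yq : y ^+ q = z + delta ^+ q by rewrite /y trD hz.
have Ypi : y ^+ pi = z ^+ pi + delta ^+ pi by rewrite /y piD.
have Yqpi : (y ^+ q) ^+ pi = z ^+ pi + (delta ^+ q) ^+ pi by rewrite Yq piD.
have Y1 : y ^+ (pi + q) = y ^+ pi * y ^+ q by rewrite exprD.
have Y2 : y ^+ (pi + 1) = y ^+ pi * y by rewrite exprD expr1.
have Y3 : y ^+ (2 * pi) = (y ^+ pi) ^+ 2 by rewrite mulnC exprM.
rewrite Y1 Y2 Y3.
have Yqq : y ^+ q ^+ q = y by exact: hqq.
have hy : y = z + delta by [].
clearbody y.
rewrite !trD !exprMn he1 he2 he3 Yqq !(exprAC _ pi q) Yqpi Ypi Yq hy.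
ring.
Qed.

Lemma geom_div (p j k : nat) : (1 < p)%N -> (0 < j)%N ->
  ((p ^ (k * j)).-1 %/ (p ^ j).-1 = \sum_(l < k) p ^ (l * j))%N.
Proof.
move=> hp hj.
have hpj : (0 < (p ^ j).-1)%N.
  have : (1 < p ^ j)%N by rewrite -[1%N](expn0 p) ltn_exp2l.
  by case: (p ^ j)%N => // [[]].
rewrite mulnC expnM predn_exp mulKn //.
by apply: eq_bigr => l _; rewrite -expnM mulnC.
Qed.

Lemma ssum_recl (p j k : nat) :
  (\sum_(l < k.+1) p ^ (l * j) = 1 + p ^ j * \sum_(l < k) p ^ (l * j))%N.
Proof.
rewrite big_ord_recl /= mul0n expn0 big_distrr /=; congr (_ + _)%N.
by apply: eq_bigr => l _; rewrite /bump /= add1n mulSn expnD.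
Qed.

Lemma ssum_recr (p j k : nat) :
  (\sum_(l < k.+1) p ^ (l * j) = \sum_(l < k) p ^ (l * j) + p ^ (k * j))%N.
Proof. by rewrite big_ord_recr. Qed.

Lemma norm_prod (F : fieldType) (p m j : nat) (hp : prime p) (hm : (0 < m)%N)
  (hj : (0 < j)%N) (b : F) (hb : b ^+ (p ^ m) = b) :
  b ^+ (\sum_(k < m %/ gcdn m j) p ^ (k * j)) =
  b ^+ ((p ^ m).-1 %/ (p ^ (gcdn m j)).-1).
Proof.
set d := gcdn m j; set n := (m %/ d)%N.
have d_gt0 : (0 < d)%N by rewrite gcdn_gt0 hm.
have hmn : m = (n * d)%N by rewrite divnK // dvdn_gcdl.
set j' := (j %/ d)%N.
have hjj : j = (j' * d)%N by rewrite divnK // dvdn_gcdr.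
have n_gt0 : (0 < n)%N by move: hm; rewrite hmn muln_gt0 => /andP[].
have cop : coprime n j'.
  by rewrite /coprime -(eqn_pmul2r d_gt0) mul1n muln_gcdl -hmn -hjj.
have -> : ((p ^ m).-1 %/ (p ^ d).-1 = \sum_(k < n) p ^ (k * d))%N.
  by rewrite {1}hmn geom_div ?prime_gt1.
rewrite !expr_sum.
transitivity (\prod_(k < n) b ^+ (p ^ (((k * j') %% n) * d))).
  apply: eq_bigr => k _; rewrite (fq_pow_mod hb) muln_modl -hmn.
  by rewrite hjj mulnA.
pose h := fun k : 'I_n => Ordinal (ltn_pmod (k * j') n_gt0).
have hinj : injective h.
  move=> k1 k2 /(congr1 val) /= e; apply: val_inj => /=.
  wlog le : k1 k2 e / (k2 <= k1)%N.
    move=> H; case: (leqP k2 k1) => [|/ltnW] l; first exact: H.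
    by symmetry; apply: H.
  move/eqP: e; rewrite eqn_mod_dvd ?leq_mul2r ?le ?orbT // -mulnBl.
  rewrite (Gauss_dvdl _ cop) => dv.
  have lt : (k1 - k2 < n)%N by have := ltn_ord k1; lia.
  case: (posnP (k1 - k2)) => [|pos]; first by lia.
  by have := dvdn_leq pos dv; lia.
rewrite [RHS](reindex_inj hinj) /=.
by apply: eq_bigr => k _; rewrite mulnC.
Qed.

Lemma predn_dvd (p a b : nat) : (a %| b)%N -> ((p ^ a).-1 %| (p ^ b).-1)%N.
Proof.
move=> /dvdnP[k ->]; rewrite mulnC expnM [X in (_ %| X)%N]predn_exp.
exact: dvdn_mulr.
Qed.

Lemma pow_pred_gt0 (p a : nat) : (1 < p)%N -> (0 < a)%N -> (0 < (p ^ a).-1)%N.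
Proof.
move=> hp ha; have : (1 < p ^ a)%N by rewrite -{1}(expn0 p) ltn_exp2l.
by case: (p ^ a)%N => // [[]].
Qed.

Lemma unit_of_fix (F : fieldType) (n : nat) (x : F) : x != 0 -> (0 < n)%N ->
  x ^+ n = x -> x ^+ n.-1 = 1.
Proof.
move=> hx hn e; apply: (mulIf hx); rewrite mul1r -exprSr prednK //.
Qed.

Lemma no_root (F : fieldType) (p m j : nat) (hp : prime p) (hm : (0 < m)%N)
  (hj : (0 < j)%N) (w b : F) (hw : w != 0) (hwq : w ^+ (p ^ m) = w)
  (hwb : w ^+ (p ^ j) = b * w) :
  b ^+ ((p ^ m).-1 %/ (p ^ (gcdn m j)).-1) = 1.
Proof.
set d := gcdn m j.
have hp1 := prime_gt1 hp.
have d_gt0 : (0 < d)%N by rewrite gcdn_gt0 hm.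
have hb : b = w ^+ (p ^ j).-1.
  apply: (mulIf hw); rewrite -hwb -exprSr prednK // expn_gt0 prime_gt0 //.
have hdj : ((p ^ d).-1 %| (p ^ j).-1)%N by apply: predn_dvd; exact: dvdn_gcdr.
have hdm : ((p ^ d).-1 %| (p ^ m).-1)%N by apply: predn_dvd; exact: dvdn_gcdl.
have hc : w ^+ (p ^ m).-1 = 1 by apply: unit_of_fix => //; rewrite expn_gt0 prime_gt0.
set r := (p ^ d).-1 in hdj hdm *.
set a := (p ^ j).-1 in hb hdj *.
set c := (p ^ m).-1 in hc hdm *.
have -> : b ^+ (c %/ r) = w ^+ (c * (a %/ r)).
  rewrite hb -exprM; congr (_ ^+ _).
  have ha := esym (divnK hdj); have hc' := esym (divnK hdm).
  set a' := (a %/ r)%N in ha *; set K := (c %/ r)%N in hc' *.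
  rewrite ha hc'; lia.
by rewrite exprM hc expr1n.
Qed.

Lemma root_exists (F : fieldType) (p m j : nat) (hp : prime p) (hm : (0 < m)%N)
  (hj : (0 < j)%N) (g : F) (hg : ((p ^ m).-1).-primitive_root g)
  (b : F) (hb0 : b != 0) (hbq : b ^+ (p ^ m) = b)
  (hN : b ^+ ((p ^ m).-1 %/ (p ^ (gcdn m j)).-1) = 1) :
  exists z : F, [/\ z != 0, z ^+ (p ^ m) = z & z ^+ (p ^ j) = b * z].
Proof.
set d := gcdn m j in hN.
have hp1 := prime_gt1 hp.
have d_gt0 : (0 < d)%N by rewrite gcdn_gt0 hm.
have hdm : ((p ^ d).-1 %| (p ^ m).-1)%N by apply: predn_dvd; exact: dvdn_gcdl.
have c_gt0 : (0 < (p ^ m).-1)%N by exact: pow_pred_gt0.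
have r_gt0 : (0 < (p ^ d).-1)%N by exact: pow_pred_gt0.
have hbc : b ^+ (p ^ m).-1 = 1 by apply: unit_of_fix => //; rewrite expn_gt0 prime_gt0.
have [i0 hi] := prim_rootP hg hbc.
move: (nat_of_ord i0) hi => i hi; clear i0.
set r := (p ^ d).-1 in hdm hN r_gt0.
set c := (p ^ m).-1 in hdm hN c_gt0 hbc hg.
set K := (c %/ r)%N in hN.
have hcK : c = (K * r)%N by rewrite divnK.
have K_gt0 : (0 < K)%N by move: c_gt0; rewrite hcK muln_gt0 => /andP[].
have ri : (r %| i)%N.
  have : (c %| i * K)%N by rewrite (prim_order_dvd hg) exprM -hi hN.
  by rewrite hcK (mulnC i) dvdn_pmul2l.
have g0 : g != 0.
  apply/negP => /eqP g0; have := prim_expr_order hg; rewrite g0 expr0n.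
  by rewrite eqn0Ngt c_gt0 => /eqP; rewrite eq_sym oner_eq0.
set w := g ^+ (i %/ r).
have hw0 : w != 0 by exact: expf_neq0.
have hwr : w ^+ r = b by rewrite hi -exprM divnK.
have hwc : w ^+ c = 1 by rewrite /w -exprM mulnC exprM (prim_expr_order hg) expr1n.
have hwq : w ^+ (p ^ m) = w.
  have pm : (0 < p ^ m)%N by rewrite expn_gt0 prime_gt0.
  by rewrite -(prednK pm) exprS hwc mulr1.
have [km kn e _] := egcdnP m hj.
rewrite gcdnC -/d in e.
set S := (\sum_(l < km) p ^ (l * j))%N.
exists (w ^+ S); split.
- exact: expf_neq0.
- by rewrite exprAC hwq.
- apply: (mulIf hw0).
  have eS : (S * p ^ j + 1 = S + p ^ (km * j))%N.
    by rewrite -ssum_recr ssum_recl /S; lia.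
  have pd : (0 < p ^ d)%N by rewrite expn_gt0 prime_gt0.
  have wpd : w ^+ (p ^ d) = b * w.
    by rewrite -(prednK pd) exprS -/r hwr mulrC.
  have wkm : w ^+ (p ^ (km * j)) = b * w.
    by rewrite e expnD exprM (fq_powk hwq) wpd.
  rewrite -exprM -exprSr -addn1 eS exprD wkm; ring.
Qed.

Lemma case4_inv (F : fieldType) (p m j : nat) (hp : prime p) (ch : p \in [pchar F])
  (hm : (0 < m)%N) (hj : (0 < j)%N) (A B C w : F) (hA0 : A != 0) (hB0 : B != 0)
  (hAq : A ^+ (p ^ m) = A) (hBq : B ^+ (p ^ m) = B) (hCq : C ^+ (p ^ m) = C)
  (hwq : w ^+ (p ^ m) = w) :
  let d := gcdn m j in
  let N := (B / A) ^+ ((p ^ m).-1 %/ (p ^ d).-1) in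
  N != 1 ->
  let z := N / (1 - N) * \sum_(k < m %/ d) (A / B) ^+ ((p ^ ((k.+1) * j)).-1 %/ (p ^ j).-1)
                              * (w / A - C / A) ^+ (p ^ (k * j)) in
  A * z ^+ (p ^ j) - B * z + C = w.
Proof.
move=> d N N1.
set n := (m %/ d)%N.
move=> z.
have hp1 := prime_gt1 hp.
have d_gt0 : (0 < d)%N by rewrite gcdn_gt0 hm.
set b := B / A.
set a := A / B.
set u := w / A - C / A.
set c := N / (1 - N).
have hb0 : b != 0 by rewrite /b mulf_neq0 // invr_eq0.
have hab : a = b^-1 by rewrite /a /b invf_div.
have ba : b * a = 1 by rewrite hab mulfV.
have hbq : b ^+ (p ^ m) = b by rewrite /b exprMn exprVn hAq hBq.
have huq : u ^+ (p ^ m) = u.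
  by rewrite /u (frB ch) !exprMn !exprVn hAq hwq hCq.
have hN0 : N != 0 by rewrite expf_neq0.
have hN1 : 1 - N != 0 by rewrite subr_eq0 eq_sym.
have hdm : ((p ^ d).-1 %| (p ^ m).-1)%N by apply: predn_dvd; exact: dvdn_gcdl.
have hNd : N ^+ (p ^ d) = N.
  have pd : (0 < p ^ d)%N by rewrite expn_gt0 prime_gt0.
  rewrite -(prednK pd) exprS /N -exprM divnK // unit_of_fix ?mulr1 //.
  by rewrite expn_gt0 prime_gt0.
have hNj : N ^+ (p ^ j) = N.
  have hjd : j = (j %/ d * d)%N by rewrite divnK // dvdn_gcdr.
  by rewrite hjd (fq_powk hNd).
have hcj : c ^+ (p ^ j) = c.
  by rewrite /c exprMn exprVn (frB ch) expr1n hNj.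
pose S k := ((p ^ ((k.+1) * j)).-1 %/ (p ^ j).-1)%N.
have hS : forall k, S k = (\sum_(l < k.+1) p ^ (l * j))%N.
  by move=> k; rewrite /S geom_div.
pose f k := a ^+ S k * u ^+ (p ^ (k * j)).
have hz : z = c * \sum_(k < n) f k by reflexivity.
have fS : forall k, f k ^+ (p ^ j) = b * f k.+1.
  move=> k; rewrite /f exprMn -!exprM.
  rewrite [S k.+1]hS ssum_recl -hS exprD expr1 2!(mulrA b) ba mul1r (mulnC (p ^ j)%N).
  congr (_ * _).
  by rewrite -expnD mulSn addnC.
have f0 : f 0%N = a * u by rewrite /f hS big_ord1 mul0n expn0 !expr1.
have fn : b * f n = N^-1 * u.
  rewrite /f hS ssum_recl exprD expr1 mulrA (mulrA b a) ba mul1r mulnC exprM.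
  have -> : a ^+ (\sum_(l < n) p ^ (l * j)) = N^-1.
    by rewrite hab exprVn norm_prod.
  rewrite exprVn hNj (fq_pow_mod huq).
  have -> : ((n * j) %% m = 0)%N.
    apply/eqP; rewrite -/(dvdn m (n * j)) /n /d.
    by rewrite mulnC gcdnC muln_divCA_gcd dvdn_mulr.
  by rewrite expn0 expr1.
have hzj : z ^+ (p ^ j) = c * b * \sum_(k < n) f k.+1.
  rewrite hz exprMn hcj (frS ch) -mulrA; congr (_ * _).
  rewrite big_distrr /=; apply: eq_bigr => k _; exact: fS.
have tele : \sum_(k < n) f k.+1 - \sum_(k < n) f k = f n - f 0%N.
  have e1 := big_ord_recl n (fun k => f k).
  have e2 := big_ord_recr n (fun k => f k).
  simpl in e1, e2.
  have : f 0%N + \sum_(k < n) f k.+1 = \sum_(k < n) f k + f n.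
    by rewrite -e1 e2.
  move=> e; apply/eqP; rewrite subr_eq addrC addrA -subr_eq -e; apply/eqP; ring.
have key : z ^+ (p ^ j) - b * z = u.
  rewrite hzj hz.
  have -> : c * b * \sum_(k < n) f k.+1 - b * (c * \sum_(k < n) f k)
           = c * (b * (\sum_(k < n) f k.+1 - \sum_(k < n) f k)) by ring.
  rewrite tele mulrBr fn f0 mulrA ba mul1r /c; field.
  by rewrite hN0 hN1.
have -> : A * z ^+ (p ^ j) - B * z + C = A * (z ^+ (p ^ j) - b * z) + C.
  rewrite /b; field; exact: hA0.
rewrite key /u; field; exact: hA0.
Qed.

Lemma comp_inverse_ext (F : finFieldType) (f g g' : F -> F) :
  (forall x, g x = g' x) -> comp_inverse f g -> comp_inverse f g'.
Proof. by move=> e h c; rewrite -!e; exact: h. Qed.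

Lemma comp_bij (F : finFieldType) (f g : F -> F) : comp_inverse f g -> bijective f.
Proof. by move=> h; exists g => x; have [] := h x. Qed.

Lemma odd_pow_anti (F : fieldType) (q : nat) (x : F) (d : int)
  (hx0 : x != 0) (hx : x ^+ q = - x) (hd : odd `|d|%N) : (x ^ d) ^+ q = - (x ^ d).
Proof.
case: d hd => n /= hd.
- rewrite exprAC hx exprNn -signr_odd hd expr1 mulN1r //.
- rewrite exprVn exprAC hx exprNn -signr_odd /= hd expr1 mulN1r invrN //.
Qed.

Unset Implicit Arguments.

Theorem theorem3p15 (F : finFieldType) (p m : nat)
  (hp : prime p) (hodd : odd p) (hm : (0 < m)%N)
  (hF : #|F| = ((p ^ m) ^ 2)%N)
  (delta b1 b2 b3 eps : F) (d1 d2 d3 : int) (i : nat)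
  (hb1 : b1 ^+ (p ^ m) = b1) (hb2 : b2 ^+ (p ^ m) = b2) (hb3 : b3 ^+ (p ^ m) = b3)
  (heps : (#|F|.-1).-primitive_root eps)
  (hd1 : odd `|d1|%N) (hd2 : odd `|d2|%N) (hd3 : odd `|d3|%N)
  (hi : (i < 2 * m)%N) :
  let q := (p ^ m)%N in
  let t := ((q + 1) %/ 2)%N in
  let j := (i %% m)%N in
  let d := gcdn m j in
  let pi := (p ^ i)%N in
  let e1 := b1 * eps ^ ((t%:Z) * d1) in
  let e2 := b2 * eps ^ ((t%:Z) * d2) in
  let e3 := b3 * eps ^ ((t%:Z) * d3) in
  let G := fun y : F => e1 * y ^+ (pi + q) + e2 * y ^+ (pi + 1) + e3 * y ^+ (2 * pi) in
  let P := fun x : F => G (x ^+ q + x + delta) - x in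
  let A := (delta ^+ q - delta) * (e1 - e2)
           + 2%:R * e3 * (delta ^+ pi - delta ^+ (pi * q)) in
  let B := 1 + (delta ^+ (pi * q) - delta ^+ pi) * (e1 + e2) in
  let C := (delta ^+ (pi + q) - delta ^+ (pi * q + 1)) * e1
           + (delta ^+ (pi + 1) - delta ^+ (pi * q + q)) * e2
           + (delta ^+ (2 * pi) - delta ^+ (2 * pi * q)) * e3 in
  let inZ := (i == 0%N) || (i == m) in
  (* (1) *)
  (inZ ->
     (bijective P <-> A - B != 0) /\
     (A - B != 0 ->
        comp_inverse P (fun x => G ((A - B)^-1 * (x ^+ q + x) - (A - B)^-1 * C + delta) - x)))
  /\
  (* (2) *)
  (~~ inZ -> A = 0 -> B != 0 ->
     bijective P /\
     comp_inverse P (fun x => G (- B^-1 * (x ^+ q + x) + B^-1 * C + delta) - x))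
  /\
  (* (3) *)
  (~~ inZ -> A != 0 -> B = 0 ->
     bijective P /\
     comp_inverse P (fun x => G ((A^-1) ^+ (p ^ (m - j)) * (x ^+ q + x) ^+ (p ^ (m - j))
                                 - (C / A) ^+ (p ^ (m - j)) + delta) - x))
  /\
  (* (4) *)
  (~~ inZ -> A * B != 0 ->
     let N := normpd p m d (B / A) in
     (bijective P <-> N != 1) /\
     (N != 1 ->
        comp_inverse P (fun x => G (delta + N / (1 - N) *
           \sum_(k < m %/ d) (A / B) ^+ ((p ^ ((k.+1) * j)).-1 %/ (p ^ j).-1)
                              * ((x ^+ q + x) / A - C / A) ^+ (p ^ (k * j))) - x))).
Proof.
move=> q t j d pi e1 e2 e3 G P A B C inZ.
have p0 : (0 < p)%N := prime_gt0 hp.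
have hp1 : (1 < p)%N := prime_gt1 hp.
have hFq : #|F| = (q * q)%N by rewrite hF mulnn.
have ch : p \in [pchar F].
  by apply: (@card_finPcharP _ _ (m * 2)) => //; rewrite hF expnM.
have trD : forall x y : F, (x + y) ^+ q = x ^+ q + y ^+ q := frD ch m.
have trN : forall x : F, (- x) ^+ q = - x ^+ q := frN ch m.
have trB : forall x y : F, (x - y) ^+ q = x ^+ q - y ^+ q := frB ch m.
have trM : forall x y : F, (x * y) ^+ q = x ^+ q * y ^+ q by move=> x y; rewrite exprMn.
have hqq : forall x : F, x ^+ q ^+ q = x by move=> x; rewrite -exprM -hFq expf_card.
have q_gt0 : (0 < q)%N by rewrite expn_gt0 p0.
have q_gt1 : (1 < q)%N by rewrite -{1}(expn0 p) ltn_exp2l.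
have N_gt0 : (0 < #|F|.-1)%N by rewrite hFq; nia.
have h2 : (2%:R : F) != 0.
  rewrite -(dvdn_pcharf ch) dvdn_prime2 //; apply/eqP => e2p.
  by move: hodd; rewrite e2p.
have hh : (2%:R : F)^-1 ^+ q + 2%:R^-1 = 1.
  rewrite exprVn (frn ch m 2); field; exact: h2.
have eps0 : eps != 0.
  apply/negP => /eqP e0; have := prim_expr_order heps; rewrite e0 expr0n.
  by rewrite eqn0Ngt N_gt0 /= => /eqP; rewrite eq_sym oner_eq0.
have oddq : odd q by rewrite /q oddX hodd orbT.
have [k hk] : exists k, q = (2 * k + 1)%N.
  by exists q./2; rewrite -{1}(odd_double_half q) oddq -muln2; lia.
have ht : t = k.+1.
  rewrite /t; move: hk; move: (q) => q' ->; lia.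
have k_gt0 : (0 < k)%N by move: q_gt1 hk; move: (q) => q'; lia.
set h := (2 * k * k + 2 * k)%N.
have hNk : (#|F|.-1 = 2 * h)%N by rewrite hFq; move: hk; move: (q) => q' ->; rewrite /h; lia.
have htq : (t * q = t + h)%N by rewrite ht; move: hk; move: (q) => q' ->; rewrite /h; lia.
have hepsq : (eps ^+ t) ^+ q = - eps ^+ t.
  have eh : eps ^+ h = -1.
    have e1' : (eps ^+ h) ^+ 2 = 1.
      by rewrite -exprM mulnC -hNk (prim_expr_order heps).
    move/eqP: e1'; rewrite sqrf_eq1 => /orP[/eqP e1'|/eqP //].
    move: e1'; move/eqP; rewrite -(prim_order_dvd heps) hNk => dv.
    have := dvdn_leq _ dv; rewrite /h; lia.
  by rewrite -exprM htq exprD eh mulrN1.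
have he : forall (bb : F) (dd : int), bb ^+ q = bb -> odd `|dd|%N ->
    (bb * eps ^ (t%:Z * dd)) ^+ q = - (bb * eps ^ (t%:Z * dd)).
  move=> bb dd hbb hdd.
  have -> : eps ^ (t%:Z * dd) = (eps ^+ t) ^ dd by rewrite -exprz_exp.
  by rewrite exprMn hbb odd_pow_anti ?mulrN // expf_neq0.
have he1 : e1 ^+ q = - e1 by exact: he.
have he2 : e2 ^+ q = - e2 by exact: he.
have he3 : e3 ^+ q = - e3 by exact: he.
clearbody e1 e2 e3.
have pi_gt0 : (0 < pi)%N by rewrite expn_gt0 p0.
pose L := fun z : F => A * z ^+ pi - B * z + C.
have htr : forall z, z ^+ q = z -> G (z + delta) ^+ q + G (z + delta) = L z + z.
  move=> z hz; exact (@trace_id F q pi trD hqq (frD ch i) e1 e2 e3 delta z he1 he2 he3 hz).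
have trq : forall x : F, (x ^+ q + x) ^+ q = x ^+ q + x.
  by move=> x; rewrite trD hqq addrC.
have hL : forall z, z ^+ q = z -> L z ^+ q = L z.
  move=> z hz; have e := htr z hz.
  have -> : L z = (G (z + delta) ^+ q + G (z + delta)) - z by rewrite e addrK.
  by rewrite trB trq hz.
have hC : C ^+ q = C.
  have := hL 0 (fr0 ch m); rewrite /L expr0n eqn0Ngt pi_gt0 /= !mulr0 subr0 add0r //.
have h2q : (2%:R : F) ^+ q = 2%:R := frn ch m 2.
have hA : A ^+ q = A.
  rewrite /A trD !trM !trB he1 he2 he3 h2q (hqq delta).
  rewrite [delta ^+ (pi * q)]exprM (hqq (delta ^+ pi)); ring.
have hB : B ^+ q = B.
  rewrite /B trD expr1n !trM !trB trD he1 he2.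
  rewrite [delta ^+ (pi * q)]exprM (hqq (delta ^+ pi)); ring.
have zpi : forall z : F, z ^+ q = z -> z ^+ pi = z ^+ (p ^ j).
  by move=> z hz; rewrite /pi (fq_pow_mod hz).
have hinv : forall x : F, x ^+ q = x -> x^-1 ^+ q = x^-1.
  by move=> x hx; rewrite exprVn hx.
have Fq0 : (0 : F) ^+ q = 0 := fr0 ch m.
have Fq1 : (1 : F) ^+ q = 1 := expr1n _ _.
have NI := not_inj trD trM trN hh htr.
have hAB : (A - B) ^+ q = A - B by rewrite trB hA hB.
split.
  move=> hz.
  have j0 : j = 0%N by rewrite /j; move: hz => /orP[/eqP ->|/eqP ->]; rewrite ?mod0n ?modnn.
  have zL : forall z, z ^+ q = z -> L z = (A - B) * z + C.
    by move=> z hz'; rewrite /L (zpi z hz') j0 expn0 expr1; ring.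
  have key : A - B != 0 -> comp_inverse P
      (fun x => G ((A - B)^-1 * (x ^+ q + x) - (A - B)^-1 * C + delta) - x).
    move=> nz.
    have hM : forall w, w ^+ q = w ->
        ((A - B)^-1 * w - (A - B)^-1 * C) ^+ q = (A - B)^-1 * w - (A - B)^-1 * C.
      by move=> w hw; rewrite trB !trM hinv // hw hC.
    apply: (frame trD trN hqq (L := L) (M := fun w => (A - B)^-1 * w - (A - B)^-1 * C)) => //.
    - move=> w hw; rewrite zL ?hM //; field; exact: nz.
    - move=> z1 z2 g1 g2; rewrite !zL // => e; apply: (mulfI nz); apply: (addIr C); exact: e.
  split; last exact: key.
  split; last by move=> nz; exact: comp_bij (key nz).
  move=> bij; apply/negP => /eqP e0.
  apply: (NI 0 1) => //; first by rewrite eq_sym oner_neq0.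
    by rewrite !zL // e0 !mul0r.
  exact: bij_inj bij.
have hAm : A ^+ (p ^ m) = A := hA.
have hBm : B ^+ (p ^ m) = B := hB.
have hCm : C ^+ (p ^ m) = C := hC.
have jpos : ~~ inZ -> (0 < j)%N.
  move=> nZ; rewrite /j lt0n; apply/negP => dv.
  have : (m %| i)%N by exact: dv.
  move/dvdnP => [kk ik]; move: nZ hi; rewrite /inZ ik; case: kk {ik} => [|[|kk]] //=.
    by rewrite mul1n eqxx orbT.
  by move=> _; rewrite ltn_pmul2r.
split.
  move=> nZ A0 B0.
  have zL : forall z, z ^+ q = z -> L z = - B * z + C.
    by move=> z _; rewrite /L A0 mul0r; ring.
  have key : comp_inverse P (fun x => G (- B^-1 * (x ^+ q + x) + B^-1 * C + delta) - x).
    have hM : forall w, w ^+ q = w ->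
        (- B^-1 * w + B^-1 * C) ^+ q = - B^-1 * w + B^-1 * C.
      by move=> w hw; rewrite trD !trM trN hinv // hw hC.
    apply: (frame trD trN hqq (L := L) (M := fun w => - B^-1 * w + B^-1 * C)) => //.
    - move=> w hw; rewrite zL ?hM //; field; exact: B0.
    - move=> z1 z2 g1 g2; rewrite !zL // => e; have nB : - B != 0 by rewrite oppr_eq0.
      apply: (mulfI nB).
      by apply: (addIr C).
  by split; [exact: comp_bij key | exact: key].
split.
  move=> nZ A0 B0.
  have j_gt0 := jpos nZ.
  have jm : (j <= m)%N by apply: ltnW; rewrite /j ltn_pmod.
  have zL : forall z, z ^+ q = z -> L z = A * z ^+ (p ^ j) + C.
    by move=> z hz; rewrite /L B0 zpi // mul0r subr0.
  set M := fun w : F => (A^-1) ^+ (p ^ (m - j)) * w ^+ (p ^ (m - j)) - (C / A) ^+ (p ^ (m - j)).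
  have hM : forall w, w ^+ q = w -> M w ^+ q = M w.
    move=> w hw; rewrite /M trB !trM !(exprAC _ _ q) hinv // hw.
    by rewrite exprMn hinv // hC.
  have key : comp_inverse P (fun x => G (M (x ^+ q + x) + delta) - x).
    apply: (frame trD trN hqq (L := L) (M := M)) => //.
    - move=> w hw; rewrite zL ?hM //.
      have hwm : w ^+ (p ^ m) = w := hw.
      have hAi : A^-1 ^+ (p ^ m) = A^-1 := hinv A hA.
      rewrite /M (frB ch) !exprMn -!exprM -!expnD subnK // hAi hwm hCm.
      field; exact: A0.
    - move=> z1 z2 g1 g2; rewrite !zL // => /addIr /(mulfI A0) /eqP.
      rewrite -subr_eq0 -(frB ch) expf_eq0 subr_eq0 => /andP[_ /eqP] //.
  by split; [exact: comp_bij key | exact: key].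
move=> nZ AB0 N.
have j_gt0 := jpos nZ.
move: AB0; rewrite mulf_eq0 negb_or => /andP[A0 B0].
have zL : forall z, z ^+ q = z -> L z = A * z ^+ (p ^ j) - B * z + C.
  by move=> z hz; rewrite /L zpi.
have hbq : (B / A) ^+ (p ^ m) = B / A by rewrite exprMn exprVn hAm hBm.
have hb0 : B / A != 0 by rewrite mulf_neq0 // invr_eq0.
have inj4 : N != 1 -> forall z1 z2, z1 ^+ q = z1 -> z2 ^+ q = z2 -> L z1 = L z2 -> z1 = z2.
  move=> N1 z1 z2 g1 g2; rewrite !zL // => e.
  apply/eqP; rewrite -subr_eq0; apply/negP => /negP nz.
  have hwq : (z1 - z2) ^+ q = z1 - z2 by rewrite trB g1 g2.
  have e' : A * (z1 ^+ (p ^ j) - z2 ^+ (p ^ j)) = B * (z1 - z2).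
    move/eqP: e; rewrite -subr_eq0 => /eqP e; apply/eqP; rewrite -subr_eq0 -e.
    apply/eqP; ring.
  have hwb : (z1 - z2) ^+ (p ^ j) = (B / A) * (z1 - z2).
    rewrite (frB ch); apply: (mulfI A0); rewrite e'; field; exact: A0.
  have := no_root hp hm j_gt0 nz hwq hwb.
  by move=> hh1; move: N1; rewrite /N /normpd hh1 eqxx.
have hdiv : ((p ^ m).-1 %| #|F|.-1)%N.
  rewrite hFq; change ((q.-1 %| (q * q).-1)%N).
  move: q_gt0; move: (q) => [|q'] // _; apply/dvdnP; exists q'.+2.
  rewrite mulSn mulnS /=; lia.
set M := fun w : F => N / (1 - N) * \sum_(k < m %/ d) (A / B) ^+ ((p ^ ((k.+1) * j)).-1 %/ (p ^ j).-1)
                              * (w / A - C / A) ^+ (p ^ (k * j)).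
have key4 : N != 1 -> comp_inverse P (fun x => G (delta + M (x ^+ q + x)) - x).
  move=> N1.
  have hNq : N ^+ q = N by rewrite /N /normpd exprAC hbq.
  have hM : forall w, w ^+ q = w -> M w ^+ q = M w.
    move=> w hw; rewrite /M trM (frS ch m); congr (_ * _).
      by rewrite trM exprVn trB expr1n hNq.
    apply: eq_bigr => kk _; rewrite trM !(exprAC _ _ q).
    have habq : (A / B) ^+ q = A / B by rewrite trM (hinv B hB) hA.
    by rewrite habq trB !trM !(hinv A hA) hw hC.
  have hLM : forall w, w ^+ q = w -> L (M w) = w.
    move=> w hw; rewrite zL ?hM //.
    exact (case4_inv hp ch hm j_gt0 A0 B0 hAm hBm hCm hw N1).
  apply: (comp_inverse_ext _ (frame trD trN hqq htr hM hLM (inj4 N1))).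
  by move=> x; rewrite (addrC (M _)).
split; last exact: key4.
split; last by move=> N1; exact: comp_bij (key4 N1).
move=> bij; apply/negP => /eqP N1.
have hg := dvdn_prim_root heps hdiv.
have [z [z0 zq zj]] := root_exists hp hm j_gt0 hg hb0 hbq N1.
have eL : L z = L 0.
  rewrite !zL // zj (fr0 ch j); field; exact: A0.
exact: (NI z 0 zq Fq0 z0 eL (bij_inj bij)).
Qed.
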